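(* Let $F$ be a field of characteristic different from $2$ and $3$, let $A$ be the free associative $F$-algebra without unity on free generators $x,y$, let $I$ be the two-sided ideal of $A$ generated by the following elements: (i) all monomials of degree $8$; (ii) all monomials of degree greater than $2$ in $x$; (iii) all monic monomials of degree $7$ except $yxy^3xy$ and $y^2xyxy^2$; (iv) all monic monomials of degree less than $7$ which do not divide either of the monomials $yxy^3xy$ and $y^2xyxy^2$; (v) the polynomial $2xy^3xy-5yxyxy^2-2yxy^3x+5y^2xyxy$; (vi) the polynomial $2yxy^3xy-5y^2xyxy^2$; let $B=A/I$, and let $B_1=F\oplus B$ be the unital hull of $B$. Then the Lie algebra $[B_1]$ is $5$-Engel but the group of units $U(B_1)$ is not $5$-Engel.
   Context: For monic monomials $m,n$ in $x,y$, $m$ divides $n$ if $n=m_1 m m_2$ for some monic monomials $m_1,m_2$ (possibly equal to $1$). The unital hull $B_1=F\oplus B$ is the direct sum of vector spaces with multiplication $(\lambda+u)(\mu+v)=\lambda\mu+(\lambda v+\mu u+uv)$, so $1\in F$ is its unity. For an associative algebra $R$, $[R]$ is the Lie algebra with bracket $[a,b]=ab-ba$ and $U(R)$ is its group of units. Set $[x,{}_{(1)}y]=[x,y]$, $[x,{}_{(k+1)}y]=[[x,{}_{(k)}y],y]$; a Lie algebra is $n$-Engel if $[u,{}_{(n)}v]=0$ for all $u,v$. For a group, $(x,y)=x^{-1}y^{-1}xy$, $(x,{}_{(k+1)}y)=((x,{}_{(k)}y),y)$; a group is $n$-Engel if $(u,{}_{(n)}v)=1$ for all $u,v$. *)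

(* Defs.v *)
From HB Require Import structures.
From mathcomp Require Import all_boot all_order all_algebra.
From mathcomp.multinomials Require Import monalg.
Set Implicit Arguments. Unset Strict Implicit. Unset Printing Implicit Defensive.
Import GRing.Theory.
Local Open Scope ring_scope.

(* Words in the two letters x (= false) and y (= true). *)
Definition word := seq bool.

(* A1 F = F<x,y>, the free associative unital F-algebra on x,y, i.e. the
   monoid algebra of the free monoid {fmonom bool}.  It is (canonically
   isomorphic to) the unital hull F (+) A of the free non-unital algebra A. *)
Definition A1 (F : fieldType) := {malg F[{fmonom bool}]}.

Definition mon (F : fieldType) (w : word) : A1 F := << FMonom w >>.
Definition X (F : fieldType) : A1 F := mon F [:: false].
Definition Y (F : fieldType) : A1 F := mon F [:: true].

Definition xdeg (w : word) : nat := count (fun b => ~~ b) w.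

Definition mdivides (m n : word) : bool := infix m n.

(* y x y^3 x y  and  y^2 x y x y^2 *)
Definition w1 : word := [:: true; false; true; true; true; false; true].
Definition w2 : word := [:: true; true; false; true; false; true; true].

Definition p5 (F : fieldType) : A1 F :=
  2%:R * (X F * Y F ^+ 3 * X F * Y F)
  - 5%:R * (Y F * X F * Y F * X F * Y F ^+ 2)
  - 2%:R * (Y F * X F * Y F ^+ 3 * X F)
  + 5%:R * (Y F ^+ 2 * X F * Y F * X F * Y F).

Definition p6 (F : fieldType) : A1 F :=
  2%:R * (Y F * X F * Y F ^+ 3 * X F * Y F)
  - 5%:R * (Y F ^+ 2 * X F * Y F * X F * Y F ^+ 2).

Definition gen (F : fieldType) (g : A1 F) : Prop :=
  (exists w : word, size w = 8%N /\ g = mon F w)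
  \/ (exists w : word, (2 < xdeg w)%N /\ g = mon F w)
  \/ (exists w : word, size w = 7%N /\ w <> w1 /\ w <> w2 /\ g = mon F w)
  \/ (exists w : word, (0 < size w < 7)%N /\ ~~ mdivides w w1
                        /\ ~~ mdivides w w2 /\ g = mon F w)
  \/ g = p5 F
  \/ g = p6 F.

(* Since all
   generators lie in A (zero constant term), the ideal of A generated by
   them coincides with the ideal of A1 = F (+) A they generate. *)
Definition inI (F : fieldType) (p : A1 F) : Prop :=
  exists (n : nat) (a b g : 'I_n -> A1 F),
    (forall i, gen (g i)) /\ p = \sum_(i < n) a i * g i * b i.

(* equality in B_1 = A1 / I *)
Definition eqB (F : fieldType) (p q : A1 F) : Prop := inI (p - q).

Definition lieb (R : pzRingType) (a b : R) : R := a * b - b * a.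
Definition lie_iter (R : pzRingType) (a b : R) (n : nat) : R :=
  iter n (fun c => lieb c b) a.

(* [B_1] is n-Engel: every [u,_(n) v] vanishes in B_1 (elements of B_1
   are represented by elements of A1). *)
Definition B1_lie_engel (F : fieldType) (n : nat) : Prop :=
  forall u v : A1 F, eqB (lie_iter u v n) 0.

Definition inv_in_B1 (F : fieldType) (u u' : A1 F) : Prop :=
  eqB (u * u') 1 /\ eqB (u' * u) 1.

(* Group computations in U(B_1) on pairs (element, inverse):
   (a,b) = a^-1 b^-1 a b, whose inverse is b^-1 a^-1 b a. *)
Definition gcomm (F : fieldType) (p q : A1 F * A1 F) : A1 F * A1 F :=
  (p.2 * q.2 * p.1 * q.1, q.2 * p.2 * q.1 * p.1).
Definition gcomm_iter (F : fieldType) (p q : A1 F * A1 F) (n : nat) :=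
  iter n (fun c => gcomm c q) p.

Definition B1_units_engel (F : fieldType) (n : nat) : Prop :=
  forall u u' v v' : A1 F, inv_in_B1 u u' -> inv_in_B1 v v' ->
    eqB (gcomm_iter (u, u') (v, v') n).1 1.

(* Main.v *)
Require Import Defs.
From HB Require Import structures.
From mathcomp Require Import all_boot all_order all_algebra.
From mathcomp.multinomials Require Import monalg.
From mathcomp Require Import ring zify.
Set Implicit Arguments. Unset Strict Implicit. Unset Printing Implicit Defensive.
Import GRing.Theory.
Local Open Scope ring_scope.

Section S.
Variable F : fieldType.
Implicit Types p q g : A1 F.
Definition coef (p : A1 F) (w : word) : F := p@_(FMonom w).
Lemma fmmulE' (a b : word) : (mul (FMonom a) (FMonom b) : {fmonom bool}) = FMonom (a ++ b).
Proof. by apply/eqP; rewrite fmP fmM. Qed.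
Lemma fm1' : (one : {fmonom bool}) = FMonom [::].
Proof. by apply/eqP; rewrite fmP fm1. Qed.

Lemma coefD p q w : coef (p + q) w = coef p w + coef q w.
Proof. by rewrite /coef mcoeffD. Qed.
Lemma coefN p w : coef (- p) w = - coef p w.
Proof. by rewrite /coef mcoeffN. Qed.
Lemma coefB p q w : coef (p - q) w = coef p w - coef q w.
Proof. by rewrite /coef mcoeffB. Qed.
Lemma coef0 w : coef 0 w = 0.
Proof. by rewrite /coef mcoeff0. Qed.
Lemma coefU a (s : word) w : coef << a *g FMonom s >> w = a *+ (s == w).
Proof. by rewrite /coef mcoeffU fmP. Qed.

Lemma malg_ind (P : A1 F -> Prop) : P 0 -> (forall p q, P p -> P q -> P (p + q)) ->
  (forall a s, P << a *g FMonom s >>) -> forall p, P p.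
Proof.
move=> P0 PD PU p; rewrite (monalgE p); apply: big_ind => // -[s] _.
exact: PU.
Qed.

Lemma split_ind (s1 s2 w : word) :
  (\sum_(i < (size w).+1) ((s1 == take i w) && (s2 == drop i w))%:R : F)
  = (s1 ++ s2 == w)%:R.
Proof.
have [E|NE] := eqVneq (s1 ++ s2) w.
  have hi : (size s1 < (size w).+1)%N by rewrite -E size_cat ltnS leq_addr.
  rewrite (bigD1 (Ordinal hi)) //=.
  have -> : take (size s1) w = s1 by rewrite -E take_size_cat.
  have -> : drop (size s1) w = s2 by rewrite -E drop_size_cat.
  rewrite !eqxx /=.
  rewrite big1 ?addr0 // => i /eqP ne; case: eqP => //= e1.
  case: ne; apply: val_inj => /=; rewrite e1 size_take.
  by move: (ltn_ord i); rewrite ltnS leq_eqVlt => /orP[/eqP->|->] //; rewrite ltnn.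
rewrite big1 // => i _.
have [e1|] := eqVneq s1 (take i w); last by [].
have [e2|] := eqVneq s2 (drop i w); last by rewrite andbF.
by rewrite e1 e2 cat_take_drop eqxx in NE.
Qed.

Lemma coefM p q w : coef (p * q) w =
  \sum_(i < (size w).+1) coef p (take i w) * coef q (drop i w).
Proof.
elim/malg_ind: p q w => [|p1 p2 IH1 IH2|a s1] q w.
- by rewrite mul0r coef0 big1 // => i _; rewrite coef0 mul0r.
- rewrite mulrDl coefD. apply: etrans; first exact: (f_equal2 +%R (IH1 q w) (IH2 q w)). rewrite -big_split.
  by apply: eq_bigr => i _; rewrite coefD mulrDl.
elim/malg_ind: q w => [|q1 q2 IH1 IH2|b s2] w.
- by rewrite mulr0 coef0 big1 // => i _; rewrite coef0 mulr0.
- rewrite mulrDr coefD; apply: etrans; first exact: (f_equal2 +%R (IH1 w) (IH2 w)).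
  rewrite -big_split.
  by apply: eq_bigr => i _; rewrite coefD mulrDr.
rewrite malgM_def fgmulUU fmmulE' coefU.
rewrite -mulr_natr -(split_ind s1 s2 w) mulr_sumr; apply: eq_bigr => i _.
rewrite !coefU; do 2 case: eqP => _ /=; rewrite ?mulr0n ?mulr1n ?mulr0 ?mul0r ?mulr1 //.
Qed.

Lemma inI0 : inI (0 : A1 F).
Proof. by exists 0%N, (fun _ => 0), (fun _ => 0), (fun _ => 0); split; [case|rewrite big_ord0]. Qed.

Lemma inID p q : inI p -> inI q -> inI (p + q).
Proof.
move=> [n1 [a1 [b1 [g1 [G1 ->]]]]] [n2 [a2 [b2 [g2 [G2 ->]]]]].
pose sel (T : Type) (f1 : 'I_n1 -> T) (f2 : 'I_n2 -> T) (i : 'I_(n1 + n2)) :=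
  match split i with inl j => f1 j | inr j => f2 j end.
have hl (j : 'I_n1) : split (lshift n2 j) = inl _ j := unsplitK (inl _ j).
have hr (j : 'I_n2) : split (rshift n1 j) = inr _ j := unsplitK (inr _ j).
exists (n1 + n2)%N, (sel _ a1 a2), (sel _ b1 b2), (sel _ g1 g2); split.
  by move=> i; rewrite /sel; case: (split i).
pose h := fun i => sel _ a1 a2 i * sel _ g1 g2 i * sel _ b1 b2 i.
rewrite [RHS](@big_split_ord (A1 F) 0 +%R n1 n2 xpredT h).
by apply: (f_equal2 +%R); apply: eq_bigr => i _; rewrite /h /sel ?hl ?hr.
Qed.

End S.


Section S.
Variable F : fieldType.
Implicit Types p q g : A1 F.
Lemma m4 (R : pzRingType) (a x g y b : R) : a * (x * g * y) * b = a * x * g * (y * b).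
Proof. by rewrite !mulrA. Qed.
Lemma inIM (a b : A1 F) p : inI p -> inI (a * p * b).
Proof.
move=> [n [a1 [b1 [g1 [G1 ->]]]]].
exists n, (fun i => a * a1 i), (fun i => b1 i * b), g1; split => //.
rewrite mulr_sumr mulr_suml; apply: eq_bigr => i _; exact: m4.
Qed.
Lemma inIgen g : gen g -> inI g.
Proof.
move=> G; exists 1%N, (fun _ => 1), (fun _ => 1), (fun _ => g); split => //.
by rewrite big_ord1 mul1r mulr1.
Qed.

Lemma inIN p : inI p -> inI (- p).
Proof. by move=> /(inIM (-1) 1); rewrite mulr1 mulN1r. Qed.

Lemma inIB p q : inI p -> inI q -> inI (p - q).
Proof. by move=> hp /inIN; apply: inID. Qed.

Lemma inIMl (a : A1 F) p : inI p -> inI (a * p).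
Proof. by move=> /(inIM a 1); rewrite mulr1. Qed.
Lemma inIMr p (b : A1 F) : inI p -> inI (p * b).
Proof. by move=> /(inIM 1 b); rewrite mul1r. Qed.

Lemma monM (a b : word) : mon F a * mon F b = mon F (a ++ b).
Proof. by rewrite /mon malgM_def fgmulUU mulr1 fmmulE'. Qed.

Lemma coef_mon (s w : word) : coef (mon F s) w = (s == w)%:R.
Proof. by rewrite /mon coefU. Qed.

Lemma coef1 w : coef (1 : A1 F) w = (w == [::])%:R.
Proof. by rewrite /coef mcoeff1 fm1' fmP. Qed.

Lemma coefC c w : coef (c%:MP : A1 F) w = c *+ (w == [::]).
Proof. by rewrite /coef mcoeffC fm1' fmP. Qed.

Lemma coefCM c p w : coef (c%:MP * p) w = c * coef p w.
Proof. by rewrite /coef mcoeffCM. Qed.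

Lemma monU c (s : word) : << c *g FMonom s >> = c%:MP * mon F s.
Proof. by apply/malgP => -[w]; rewrite mcoeffCM /mon !mcoeffU mulr_natr. Qed.

Definition a1 : word := [:: false; true; true; true; false; true].
Definition a2 : word := [:: true; false; true; false; true; true].
Definition a3 : word := [:: true; false; true; true; true; false].
Definition a4 : word := [:: true; true; false; true; false; true].

Lemma mon_in_I (s : word) : ~~ infix s w1 -> ~~ infix s w2 -> inI (mon F s).
Proof.
move=> n1 n2.
have [le8|lt8] := leqP 8 (size s).
  rewrite -(cat_take_drop 8 s) -monM; apply: inIMr; apply: inIgen; left.
  by exists (take 8 s); rewrite size_takel.
have [e7|ne7] := eqVneq (size s) 7.
  apply: inIgen; right; right; left; exists s; split => //; split; last split => //.
    by move=> e; move: n1; rewrite e infix_refl.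
  by move=> e; move: n2; rewrite e infix_refl.
apply: inIgen; right; right; right; left; exists s; split => //.
case: s n1 lt8 ne7 {n2} => [|b s]; first by rewrite infix0s.
by move=> _ /= h1 h2; rewrite ltn_neqAle h2 -ltnS h1.
Qed.

Lemma coefnat (n : nat) p w : coef (n%:R * p) w = n%:R * coef p w.
Proof. by rewrite -mpolyC_nat coefCM. Qed.

Lemma p5_gen (R : pzRingType) (m : word -> R) (hm : forall a b, m a * m b = m (a ++ b)) :
  2%:R * (m [:: false] * m [:: true] ^+ 3 * m [:: false] * m [:: true])
  - 5%:R * (m [:: true] * m [:: false] * m [:: true] * m [:: false] * m [:: true] ^+ 2)
  - 2%:R * (m [:: true] * m [:: false] * m [:: true] ^+ 3 * m [:: false])
  + 5%:R * (m [:: true] ^+ 2 * m [:: false] * m [:: true] * m [:: false] * m [:: true])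
  = 2%:R * m a1 - 5%:R * m a2 - 2%:R * m a3 + 5%:R * m a4.
Proof. by rewrite exprS !expr2 !hm. Qed.

Lemma p6_gen (R : pzRingType) (m : word -> R) (hm : forall a b, m a * m b = m (a ++ b)) :
  2%:R * (m [:: true] * m [:: false] * m [:: true] ^+ 3 * m [:: false] * m [:: true])
  - 5%:R * (m [:: true] ^+ 2 * m [:: false] * m [:: true] * m [:: false] * m [:: true] ^+ 2)
  = 2%:R * m w1 - 5%:R * m w2.
Proof. by rewrite exprS !expr2 !hm. Qed.

Lemma p5E : p5 F = 2%:R * mon F a1 - 5%:R * mon F a2 - 2%:R * mon F a3 + 5%:R * mon F a4.
Proof. exact: (p5_gen (@monM)). Qed.

Lemma p6E : p6 F = 2%:R * mon F w1 - 5%:R * mon F w2.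
Proof. exact: (p6_gen (@monM)). Qed.

End S.


Section S.
Variable F : fieldType.
Implicit Types p q g : A1 F.
Lemma coef_p5_gen (U V : pzRingType) (m : word -> U) (f : U -> V) w
  (hm : forall a b, m a * m b = m (a ++ b))
  (fB : forall x y, f (x - y) = f x - f y) (fD : forall x y, f (x + y) = f x + f y)
  (fn : forall n x, f (n%:R * x) = n%:R * f x) (fm : forall s, f (m s) = (s == w)%:R) :
  f (2%:R * (m [:: false] * m [:: true] ^+ 3 * m [:: false] * m [:: true])
  - 5%:R * (m [:: true] * m [:: false] * m [:: true] * m [:: false] * m [:: true] ^+ 2)
  - 2%:R * (m [:: true] * m [:: false] * m [:: true] ^+ 3 * m [:: false])
  + 5%:R * (m [:: true] ^+ 2 * m [:: false] * m [:: true] * m [:: false] * m [:: true]))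
  = 2%:R * (a1 == w)%:R - 5%:R * (a2 == w)%:R - 2%:R * (a3 == w)%:R + 5%:R * (a4 == w)%:R.
Proof. by rewrite p5_gen // fD !fB !fn !fm. Qed.

Lemma coef_p6_gen (U V : pzRingType) (m : word -> U) (f : U -> V) w
  (hm : forall a b, m a * m b = m (a ++ b))
  (fB : forall x y, f (x - y) = f x - f y)
  (fn : forall n x, f (n%:R * x) = n%:R * f x) (fm : forall s, f (m s) = (s == w)%:R) :
  f (2%:R * (m [:: true] * m [:: false] * m [:: true] ^+ 3 * m [:: false] * m [:: true])
  - 5%:R * (m [:: true] ^+ 2 * m [:: false] * m [:: true] * m [:: false] * m [:: true] ^+ 2))
  = 2%:R * (w1 == w)%:R - 5%:R * (w2 == w)%:R.
Proof. by rewrite p6_gen // !fB !fn !fm. Qed.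

Lemma coef_p5 w : coef (p5 F) w = 2%:R * (a1 == w)%:R - 5%:R * (a2 == w)%:R
   - 2%:R * (a3 == w)%:R + 5%:R * (a4 == w)%:R.
Proof.
exact: (coef_p5_gen (m := mon F) (f := fun p => coef p w) (@monM F) (fun x y => coefB x y w) (fun x y => coefD x y w) (fun n x => coefnat n x w) (fun s => coef_mon F s w)).
Qed.

Lemma coef_p6 w : coef (p6 F) w = 2%:R * (w1 == w)%:R - 5%:R * (w2 == w)%:R.
Proof.
exact: (coef_p6_gen (m := mon F) (f := fun p => coef p w) (@monM F) (fun x y => coefB x y w) (fun n x => coefnat n x w) (fun s => coef_mon F s w)).
Qed.

Definition goodw (s : word) := (size s < 6)%N || (s \in [:: a1; a2; a3; a4; w1; w2]).

Lemma infix_good (s w : word) : (w == w1) || (w == w2) -> infix s w -> goodw s.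
Proof.
move=> hw hi; have si := size_infix hi.
have hidx : (infix_index s w <= size w)%N by rewrite infixTindex.
move: hi; rewrite infixE => /eqP E; rewrite -E.
have T : forall w, (w == w1) || (w == w2) -> all (fun i => all (fun j => goodw (take j (drop i w))) (iota 0 8)) (iota 0 8).
  by move=> w0 /orP[] /eqP ->.
have sw : size w = 7%N by case/orP: hw => /eqP ->.
rewrite sw in hidx si.
have /allP /(_ (infix_index s w)) := T w hw.
rewrite mem_iota add0n ltnS hidx => /(_ isT) /allP /(_ (size s)).
by rewrite mem_iota add0n ltnS si => /(_ isT).
Qed.

Lemma decomp (R : pzRingType) (p a b : R) : p = (p - a - b) + b * 1 + a * 1.
Proof. by rewrite !mulr1 !subrK. Qed.

Lemma lin2 (U V : zmodType) (f : U -> V) (fB : forall x y, f (x - y) = f x - f y) (p a b : U) :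
  f (p - a - b) = f p - f a - f b.
Proof. by rewrite !fB. Qed.

Lemma K p (t k : F) : (forall w, (size w < 6)%N -> coef p w = 0) ->
  coef p a1 = 2%:R * t -> coef p a2 = - (5%:R * t) ->
  coef p a3 = - (2%:R * t) -> coef p a4 = 5%:R * t ->
  coef p w1 = 2%:R * k -> coef p w2 = - (5%:R * k) -> inI p.
Proof.
move=> Hs H1 H2 H3 H4 H5 H6.
set q := p - t%:MP * p5 F - k%:MP * p6 F.
have -> : p = q + k%:MP * p6 F * 1 + t%:MP * p5 F * 1 := decomp _ _ _.
have g5 : inI (p5 F) by apply: inIgen; do 4 right; left.
have g6 : inI (p6 F) by apply: inIgen; do 5 right.
apply: inID; [apply: inID|]; last 2 first.
- by apply: inIM.
- by apply: inIM.
have Hq : forall s, goodw s -> coef q s = 0.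
  move=> s.
  have Eq : coef q s = coef p s - t * coef (p5 F) s - k * coef (p6 F) s.
    rewrite -(coefCM t) -(coefCM k).
    exact: (lin2 (f := fun x => coef x s) (fun x y => coefB x y s) p (t%:MP * p5 F) (k%:MP * p6 F)).
  rewrite Eq coef_p5 coef_p6.
  case/orP => [hs|].
    have ne (a : word) : (5 < size a)%N -> a == s = false.
      by move=> e; apply/negbTE; apply/eqP => E; move: hs; rewrite -E ltnNge e.
    rewrite Hs // !ne //= !mulr0n; ring.
  rewrite !inE; case/orP => [/eqP->|]; first by rewrite H1 /= !mulr0n !mulr1n; ring.
  case/orP => [/eqP->|]; first by rewrite H2 /= !mulr0n !mulr1n; ring.
  case/orP => [/eqP->|]; first by rewrite H3 /= !mulr0n !mulr1n; ring.
  case/orP => [/eqP->|]; first by rewrite H4 /= !mulr0n !mulr1n; ring.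
  case/orP => [/eqP->|/eqP->]; first by rewrite H5 /= !mulr0n !mulr1n; ring.
  by rewrite H6 /= !mulr0n !mulr1n; ring.
rewrite (monalgE q); apply: big_ind => [|x y|]; [exact: inI0|exact: inID|].
move=> [s] _; rewrite monU.
have [g|ng] := boolP (goodw s).
  by have := Hq s g; rewrite /coef => ->; rewrite malgC0E mul0r; apply: inI0.
apply: inIMl; apply: mon_in_I; apply: contra ng; apply: infix_good; rewrite eqxx ?orbT //.
Qed.

Definition tm (f g : word -> F) (w : word) : F :=
  foldr (fun i acc => f (take i w) * g (drop i w) + acc) 0 (iota 1 (size w).-1).

Fixpoint tl (f g : word -> F) (n : nat) : word -> F :=
  match n with 0 => f | n'.+1 => fun w => tm (tl f g n') g w - tm g (tl f g n') w end.

End S.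


Section S.
Variable F : fieldType.
Implicit Types p q g : A1 F.

Lemma idA2 (f g : word -> F) : 2%:R * tl f g 5 a2 + 5%:R * tl f g 5 a1 = 0.
Proof. cbv [tl tm a1 a2 foldr iota take drop size predn]; ring. Qed.
Lemma idA3 (f g : word -> F) : 2%:R * tl f g 5 a3 + 2%:R * tl f g 5 a1 = 0.
Proof. cbv [tl tm a1 a3 foldr iota take drop size predn]; ring. Qed.
Lemma idA4 (f g : word -> F) : 2%:R * tl f g 5 a4 - 5%:R * tl f g 5 a1 = 0.
Proof. cbv [tl tm a1 a4 foldr iota take drop size predn]; ring. Qed.
Lemma idW2 (f g : word -> F) : 2%:R * tl f g 5 w2 + 5%:R * tl f g 5 w1 = 0.
Proof. cbv [tl tm w1 w2 foldr iota take drop size predn]; ring. Qed.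

Lemma solA (x y a : F) : 2%:R != 0 :> F -> 2%:R * y + a * x = 0 -> y = - (a * (x / 2%:R)).
Proof.
move=> h E; have : y = (2%:R * y + a * x - a * x) / 2%:R by field.
by rewrite E => ->; field.
Qed.
Lemma solB (x y : F) : 2%:R != 0 :> F -> 2%:R * y - 5%:R * x = 0 -> y = 5%:R * (x / 2%:R).
Proof.
move=> h E; have : y = (2%:R * y - 5%:R * x + 5%:R * x) / 2%:R by field.
by rewrite E => ->; field.
Qed.
End S.


Section S.
Variable F : fieldType.
Implicit Types p q g u v : A1 F.

Lemma big_foldr n m (G : nat -> F) :
  \sum_(i < n) G (i + m)%N = foldr (fun i acc => G i + acc) 0 (iota m n).
Proof.
elim: n m => [|n IH] m; first by rewrite big_ord0.
rewrite big_ord_recl /= add0n -IH; congr (_ + _); apply: eq_bigr => i _.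
by rewrite /bump leq0n add1n addSnnS.
Qed.

Lemma coefM0 p q w : coef p [::] = 0 -> coef q [::] = 0 ->
  coef (p * q) w = tm (coef p) (coef q) w.
Proof.
move=> hp hq; rewrite coefM.
case: w => [|b w]; first by rewrite big_ord1 /= hp mul0r.
rewrite big_ord_recl /= hp mul0r add0r big_ord_recr /=.
rewrite drop_oversize // hq mulr0 addr0 /tm /=.
rewrite -(big_foldr _ _ (fun i => coef p (take i (b :: w)) * coef q (drop i (b :: w)))).
by apply: eq_bigr => i _; rewrite /bump /= addn1.
Qed.

Lemma tm_ext (f f' g g' : word -> F) w : f =1 f' -> g =1 g' -> tm f g w = tm f' g' w.
Proof. by move=> Ef Eg; rewrite /tm; elim: (iota _ _) => //= i l ->; rewrite Ef Eg. Qed.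

Lemma foldr0 (l : seq nat) (G : nat -> F) : (forall i, i \in l -> G i = 0) ->
  foldr (fun i acc => G i + acc) 0 l = 0.
Proof.
elim: l => //= i l IH h; rewrite h ?inE ?eqxx // IH ?addr0 // => j hj.
by apply: h; rewrite inE hj orbT.
Qed.

Lemma tm_low (f g : word -> F) w (a b : nat) :
  (forall x, (size x < a)%N -> f x = 0) -> (forall x, (size x < b)%N -> g x = 0) ->
  (size w < a + b)%N -> tm f g w = 0.
Proof.
move=> hf hg hw; rewrite /tm; apply: foldr0 => i; rewrite mem_iota => /andP[h1 h2].
have hi : (i <= size w)%N by lia.
have [ia|ia] := ltnP i a; first by rewrite hf ?mul0r // size_takel.
by rewrite hg ?mulr0 // size_drop; lia.
Qed.

Lemma tl_low (f g : word -> F) : f [::] = 0 -> g [::] = 0 ->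
  forall n w, (size w < n.+1)%N -> tl f g n w = 0.
Proof.
move=> hf hg; elim => [|n IH] w hw /=.
  by case: w hw.
have hg' : forall x : word, (size x < 1)%N -> g x = 0 by case.
by rewrite (tm_low IH hg') ?(tm_low hg' IH) ?subrr //; lia.
Qed.

Lemma lie_coef u v : coef u [::] = 0 -> coef v [::] = 0 -> forall n,
  coef (lie_iter u v n) [::] = 0 /\ forall w, coef (lie_iter u v n) w = tl (coef u) (coef v) n w.
Proof.
move=> hu hv; elim => [|n [IH0 IH]]; first by [].
have E : lie_iter u v n.+1 = lie_iter u v n * v - v * lie_iter u v n by [].
have Ew : forall w, coef (lie_iter u v n.+1) w =
   tm (coef (lie_iter u v n)) (coef v) w - tm (coef v) (coef (lie_iter u v n)) w.
  move=> w; exact: (etrans (coefB _ _ w) (f_equal2 (fun a b => a - b) (coefM0 w IH0 hv) (coefM0 w hv IH0))).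
split; first by rewrite Ew /tm /= subrr.
by move=> w; rewrite Ew /=; congr (_ - _); apply: tm_ext.
Qed.

Lemma lieb_cr (R : pzRingType) (x v d : R) : d * x = x * d -> lieb x (v - d) = lieb x v.
Proof. by move=> h; rewrite /lieb mulrBr mulrBl h opprB addrA subrK. Qed.
Lemma lieb_cl (R : pzRingType) (u v c : R) : c * v = v * c -> lieb (u - c) v = lieb u v.
Proof. by move=> h; rewrite /lieb mulrBr mulrBl h opprB addrA subrK. Qed.

Lemma strip_gen (R : pzRingType) (u v c d : R) (hc : forall x, c * x = x * c)
  (hd : forall x, d * x = x * d) n :
  lie_iter u v n.+1 = lie_iter (u - c) (v - d) n.+1.
Proof.
have A : forall w m, lie_iter w (v - d) m = lie_iter w v m.
  move=> w; elim => [|m IH] //=; rewrite /lie_iter /= -/(lie_iter w (v - d) m) -/(lie_iter w v m).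
  by rewrite IH lieb_cr.
rewrite A; elim: n => [|n IH]; first by rewrite /lie_iter /= lieb_cl.
rewrite /lie_iter iterS -/(lie_iter u v n.+1) IH iterS.
by rewrite -/(lie_iter (u - c) v n.+1).
Qed.

Lemma malgC_comm c p : c%:MP * p = p * c%:MP.
Proof.
elim/malg_ind: p => [|p q Hp Hq|a s].
- by rewrite mulr0 mul0r.
- by rewrite mulrDr mulrDl Hp Hq.
rewrite !malgM_def !fgmulUU mul1m mulm1 mulrC.
done.
Qed.
End S.


Section S.
Variable F : fieldType.
Implicit Types p q g u v : A1 F.

Lemma engel : (2%:R : F) != 0 -> B1_lie_engel F 5.
Proof.
move=> h2 u v; rewrite /eqB subr0.
have -> := strip_gen (c := (coef u [::])%:MP) (d := (coef v [::])%:MP) u v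
  (fun x => malgC_comm _ x) (fun x => malgC_comm _ x) 4.
set u0 := u - _; set v0 := v - _.
have hu0 : coef u0 [::] = 0 by rewrite /u0 coefB coefC /= mulr1n subrr.
have hv0 : coef v0 [::] = 0 by rewrite /v0 coefB coefC /= mulr1n subrr.
have [_ E] := lie_coef hu0 hv0 5.
set P := lie_iter u0 v0 5.
apply: (K (t := coef P a1 / 2%:R) (k := coef P w1 / 2%:R)).
- by move=> w hw; rewrite E; apply: tl_low.
- by rewrite mulrC divfK.
- by rewrite !E; apply: solA => //; apply: idA2.
- by rewrite !E; apply: solA => //; apply: idA3.
- by rewrite !E; apply: solB => //; apply: idA4.
- by rewrite mulrC divfK.
- by rewrite !E; apply: solA => //; apply: idW2.
Qed.
End S.


Fixpoint weq (a b : word) : bool :=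
  match a, b with
  | [::], [::] => true
  | x :: a', y :: b' => (if x then y else ~~ y) && weq a' b'
  | _, _ => false
  end.

Lemma weqE a b : weq a b = (a == b).
Proof. by elim: a b => [|x a IH] [|y b] //=; rewrite IH eqseq_cons; case: x; case: y. Qed.

Section S.
Variable F : fieldType.
Implicit Types p q g u v : A1 F.

Definition sp (f g : word -> F) (w : word) : F :=
  foldr (fun i acc => f (take i w) * g (drop i w) + acc) 0 (iota 0 (size w).+1).

Lemma coefMsp p q w : coef (p * q) w = sp (coef p) (coef q) w.
Proof.
rewrite coefM /sp -(big_foldr _ _ (fun i => coef p (take i w) * coef q (drop i w))).
by apply: eq_bigr => i _; rewrite addn0.
Qed.

Lemma sp_ext (f f' g g' : word -> F) w : (forall i, f (take i w) = f' (take i w)) ->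
  (forall i, g (drop i w) = g' (drop i w)) -> sp f g w = sp f' g' w.
Proof. by move=> Ef Eg; rewrite /sp; elim: (iota _ _) => //= i l ->; rewrite Ef Eg. Qed.

Definition c5 (x : word) : F := 2%:R * (weq a1 x)%:R - 5%:R * (weq a2 x)%:R
   - 2%:R * (weq a3 x)%:R + 5%:R * (weq a4 x)%:R.
Definition c6 (x : word) : F := 2%:R * (weq w1 x)%:R - 5%:R * (weq w2 x)%:R.

Definition lam p := 5%:R * coef p w1 + 2%:R * coef p w2.

Lemma lam5 (fa fb : word -> F) :
  5%:R * sp (fun x => sp fa c5 x) fb w1 + 2%:R * sp (fun x => sp fa c5 x) fb w2 = 0.
Proof. cbv [sp c5 weq a1 a2 a3 a4 w1 w2 foldr iota take drop size nat_of_bool negb andb]; ring. Qed.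

Lemma lam6 (fa fb : word -> F) :
  5%:R * sp (fun x => sp fa c6 x) fb w1 + 2%:R * sp (fun x => sp fa c6 x) fb w2 = 0.
Proof. cbv [sp c6 weq w1 w2 foldr iota take drop size nat_of_bool negb andb]; ring. Qed.

Lemma coef_aPb a P b w : coef (a * P * b) w = sp (fun x => sp (coef a) (coef P) x) (coef b) w.
Proof.
rewrite coefMsp; apply: sp_ext => // i; exact: coefMsp.
Qed.

Lemma lam_p5 a b : lam (a * p5 F * b) = 0.
Proof.
rewrite /lam !coef_aPb.
have E : forall w, sp (fun x => sp (coef a) (coef (p5 F)) x) (coef b) w =
   sp (fun x => sp (coef a) c5 x) (coef b) w.
  move=> w; apply: sp_ext => // i; apply: sp_ext => // j.
  by rewrite coef_p5 /c5 !weqE.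
by rewrite !E lam5.
Qed.

Lemma lam_p6 a b : lam (a * p6 F * b) = 0.
Proof.
rewrite /lam !coef_aPb.
have E : forall w, sp (fun x => sp (coef a) (coef (p6 F)) x) (coef b) w =
   sp (fun x => sp (coef a) c6 x) (coef b) w.
  move=> w; apply: sp_ext => // i; apply: sp_ext => // j.
  by rewrite coef_p6 /c6 !weqE.
by rewrite !E lam6.
Qed.

Lemma foldr0' (l : seq nat) (G : nat -> F) : (forall i, G i = 0) ->
  foldr (fun i acc => G i + acc) 0 l = 0.
Proof. by move=> h; elim: l => //= i l ->; rewrite h addr0. Qed.

Lemma coef_amb a s b w : ~~ infix s w -> coef (a * mon F s * b) w = 0.
Proof.
move=> ni; rewrite coef_aPb /sp; apply: foldr0' => i; rewrite /sp foldr0' ?mul0r // => j.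
rewrite coef_mon.
case: eqP => [E|]; last by rewrite mulr0.
case/negP: ni; apply/infixP; exists (take j (take i w)), (drop i w).
by rewrite E catA !cat_take_drop.
Qed.

Lemma lam_mon a s b : ~~ infix s w1 -> ~~ infix s w2 -> lam (a * mon F s * b) = 0.
Proof. by move=> h1 h2; rewrite /lam !coef_amb // !mulr0 addr0. Qed.
End S.


Lemma infix_count (P : pred bool) (s t : word) : infix s t -> (count P s <= count P t)%N.
Proof. by case/infixP => s1 [s2 ->]; rewrite !count_cat; lia. Qed.

Lemma infix_size_eq (s t : word) : infix s t -> size s = size t -> s = t.
Proof.
case/infixP => s1 [s2 ->]; rewrite !size_cat => h.
move: h; rewrite addnCA -{1}[size s]addn0 => /addnI /esym /eqP.
by rewrite addn_eq0 !size_eq0 => /andP[/eqP-> /eqP->]; rewrite cats0.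
Qed.

Section S.
Variable F : fieldType.
Implicit Types p q g u v : A1 F.

Lemma lamD p q : lam (p + q) = lam p + lam q.
Proof. rewrite /lam !coefD; ring. Qed.

Lemma lam0 : lam (0 : A1 F) = 0.
Proof. by rewrite /lam !coef0 !mulr0 addr0. Qed.

Lemma gen_lam g (a b : A1 F) : gen g -> lam (a * g * b) = 0.
Proof.
case=> [[w [hs ->]]|[[w [hx ->]]|[[w [hs [n1 [n2 ->]]]]|[[w [_ [n1 [n2 ->]]]]|[->|->]]]]].
- by apply: lam_mon; apply/negP => /size_infix; rewrite hs.
- apply: lam_mon; apply/negP => /(infix_count (fun b => ~~ b)) h.
  + by have := leq_trans hx h.
  + by have := leq_trans hx h.
- apply: lam_mon; apply/negP => h.
  + by apply: n1; apply: infix_size_eq.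
  + by apply: n2; apply: infix_size_eq.
- by apply: lam_mon.
- exact: lam_p5.
- exact: lam_p6.
Qed.

Lemma inI_lam p : inI p -> lam p = 0.
Proof.
case=> n [a [b [g [G ->]]]].
apply: (big_ind (fun x => lam x = 0)); first exact: lam0.
  by move=> x y hx hy; rewrite lamD hx hy addr0.
by move=> i _; apply: gen_lam.
Qed.
End S.


Definition Sg (R : pzRingType) (y : R) (n : nat) : R := \sum_(i < n) (-1) ^+ i * y ^+ i.

Lemma signr_comm (R : pzRingType) n (x : R) : (-1) ^+ n * x = x * (-1) ^+ n.
Proof. by rewrite -signr_odd; case: (odd n); rewrite ?expr1 ?expr0 ?mulN1r ?mulrN1 ?mul1r ?mulr1. Qed.

Lemma geo (R : pzRingType) (y : R) n :
  (1 + y) * Sg y n = 1 - (-1) ^+ n * y ^+ n /\ Sg y n * (1 + y) = 1 - (-1) ^+ n * y ^+ n.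
Proof.
elim: n => [|n [IH1 IH2]]; first by rewrite /Sg big_ord0 mulr0 mul0r !expr0 mulr1 subrr.
have ES : Sg y n.+1 = Sg y n + (-1) ^+ n * y ^+ n by rewrite /Sg big_ord_recr.
have Ehi : (-1) ^+ n.+1 * y ^+ n.+1 = - ((-1) ^+ n * y ^+ n.+1).
  by rewrite exprSr mulrN1 mulNr.
rewrite ES Ehi opprK; split.
  rewrite mulrDr IH1 mulrDl mul1r.
  have -> : y * ((-1) ^+ n * y ^+ n) = (-1) ^+ n * y ^+ n.+1.
    by rewrite mulrA -signr_comm -mulrA -exprS.
  by rewrite addrA subrK.
rewrite mulrDl IH2 mulrDr mulr1.
have -> : (-1) ^+ n * y ^+ n * y = (-1) ^+ n * y ^+ n.+1 by rewrite -mulrA -exprSr.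
by rewrite addrA subrK.
Qed.

Lemma sub1_gen (R : pzRingType) (c : R) : 1 - c - 1 = - c.
Proof. by rewrite addrAC subrr add0r. Qed.

Lemma pow_m (R : pzRingType) (m : word -> R) (hm : forall a b, m a * m b = m (a ++ b))
  (h0 : m [::] = 1) (b : bool) i : m [:: b] ^+ i = m (nseq i b).
Proof. by elim: i => [|i IH]; rewrite ?expr0 ?h0 // exprS IH hm. Qed.

Section S.
Variable F : fieldType.
Implicit Types p q g u v : A1 F.

Lemma mon_nil : mon F [::] = 1.
Proof. by rewrite /mon -fm1' mpolyC1E. Qed.

Lemma powX (b : bool) i : mon F [:: b] ^+ i = mon F (nseq i b).
Proof. exact: (pow_m (@monM F) mon_nil). Qed.

Lemma inv_ok (b : bool) n u' : u' = Sg (mon F [:: b]) n -> inI (mon F (nseq n b)) ->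
  inv_in_B1 (1 + mon F [:: b]) u'.
Proof.
move=> -> hI; have [E1 E2] := geo (mon F [:: b]) n.
rewrite /inv_in_B1 /eqB E1 E2 sub1_gen powX.
by split; apply: inIN; apply: inIMl.
Qed.
End S.


Definition Slist : seq word :=
  undup (flatten [seq [seq take j (drop i w) | i <- iota 0 8, j <- iota 0 8] | w <- [:: w1; w2]]).

Definition lk (R : pzRingType) (a : seq R) (x : word) : R := nth 0 a (find (weq x) Slist).

Definition spg (R : pzRingType) (f g : word -> R) (w : word) : R :=
  foldr (fun i acc => f (take i w) * g (drop i w) + acc) 0 (iota 0 (size w).+1).

Definition vmul (R : pzRingType) (a b : seq R) : seq R := [seq spg (lk a) (lk b) s | s <- Slist].

Definition gci (p q : seq int * seq int) :=
  (vmul (vmul (vmul p.2 q.2) p.1) q.1, vmul (vmul (vmul q.2 p.2) q.1) p.1).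

Definition altv (b : bool) (n : nat) (s : word) : int :=
  foldr (fun i acc => (-1) ^+ i * (weq (nseq i b) s)%:R + acc) 0 (iota 0 n).

Definition ui := [seq (weq [::] s)%:R + (weq [:: false] s)%:R : int | s <- Slist].
Definition ui' := [seq altv false 3 s | s <- Slist].
Definition vi := [seq (weq [::] s)%:R + (weq [:: true] s)%:R : int | s <- Slist].
Definition vi' := [seq altv true 8 s | s <- Slist].

Definition finalN : int :=
  let c := (iter 5 (fun c => gci c (vi, vi')) (ui, ui')).1 in 5%:R * lk c w1 + 2%:R * lk c w2.

Lemma finalN_val : finalN = 12%:R.
Proof. by vm_compute. Qed.

Lemma Slist_closed : all (fun s => all (fun i => has (weq (take i s)) Slist && has (weq (drop i s)) Slist) (iota 0 8)) Slist.
Proof. by vm_compute. Qed.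

Lemma Slist_size : all (fun s => size s <= 7)%N Slist.
Proof. by vm_compute. Qed.


Lemma memS x : has (weq x) Slist = (x \in Slist).
Proof. by rewrite -has_pred1; apply: eq_has => y; rewrite weqE eq_sym. Qed.

Lemma Sclosed s i : s \in Slist -> (take i s \in Slist) && (drop i s \in Slist).
Proof.
move=> hs; have /allP /(_ s hs) hsz := Slist_size.
have /allP /(_ s hs) /allP C := Slist_closed.
have [hi|hi] := ltnP i 8.
  have hi' : i \in iota 0 8 by rewrite mem_iota.
  have /andP[h1 h2] := C i hi'.
  by rewrite -!memS h1 h2.
have h7 : 7 \in iota 0 8 by rewrite mem_iota.
have /andP[h1 h2] := C 7 h7.
have hsi : (size s <= i)%N := leq_trans hsz (ltnW hi).
have e1 : take i s = take 7 s by rewrite !take_oversize.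
have e2 : drop i s = drop 7 s by rewrite !drop_oversize.
by rewrite e1 e2 -!memS h1 h2.
Qed.

Lemma spg_ext (R : pzRingType) (f f' g g' : word -> R) w : (forall i, f (take i w) = f' (take i w)) ->
  (forall i, g (drop i w) = g' (drop i w)) -> spg f g w = spg f' g' w.
Proof. by move=> Ef Eg; rewrite /spg; elim: (iota _ _) => //= i l ->; rewrite Ef Eg. Qed.

Section S.
Variable F : fieldType.
Implicit Types p q g u v : A1 F.

Definition vec p := [seq coef p s | s <- Slist].

Lemma lk_vec p x : x \in Slist -> lk (vec p) x = coef p x.
Proof.
rewrite -memS => hx; rewrite /lk /vec (nth_map [::]) ?size_map -?has_find //.
by have := nth_find [::] hx; rewrite weqE => /eqP <-.
Qed.

Lemma vec_mul p q : vec (p * q) = vmul (vec p) (vec q).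
Proof.
apply/eq_in_map => s hs; rewrite coefMsp.
change (sp (coef p) (coef q) s = sp (lk (vec p)) (lk (vec q)) s).
apply: sp_ext => i.
  by rewrite lk_vec //; case/andP: (Sclosed i hs).
by rewrite lk_vec //; case/andP: (Sclosed i hs).
Qed.

Notation ir := (fun z : int => (z%:~R : F)).

Lemma lk_map (a : seq int) x : lk (map ir a) x = ir (lk a x).
Proof.
rewrite /lk; case: (ltnP (find (weq x) Slist) (size a)) => h.
  by rewrite (nth_map 0).
by rewrite !nth_default ?size_map.
Qed.

Lemma spg_map (f g : word -> int) w : ir (spg f g w) = spg (ir \o f) (ir \o g) w.
Proof. by rewrite /spg; elim: (iota _ _) => /= [|i l <-]; rewrite ?rmorph0 ?rmorphD ?rmorphM. Qed.

Lemma vmul_map (a b : seq int) : map ir (vmul a b) = vmul (map ir a) (map ir b).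
Proof.
rewrite /vmul -map_comp; apply: eq_map => s /=; rewrite spg_map.
by apply: spg_ext => i /=; rewrite lk_map.
Qed.
End S.


Section S.
Variable F : fieldType.
Implicit Types p q g u v : A1 F.
Notation ir := (fun z : int => (z%:~R : F)).

Lemma vec_u b : vec (1 + mon F [:: b]) = map ir [seq (weq [::] s)%:R + (weq [:: b] s)%:R : int | s <- Slist].
Proof.
rewrite /vec -map_comp; apply: eq_map => s; rewrite /comp.
by rewrite coefD coef1 coef_mon rmorphD !rmorph_nat !weqE eq_sym.
Qed.

Lemma coef_sign i p s : coef ((-1) ^+ i * p) s = (-1) ^+ i * coef p s.
Proof.
elim: i => [|i IH]; first by rewrite !expr0 !mul1r.
by rewrite !exprS !mulN1r !mulNr coefN IH.
Qed.

Lemma vec_S b n : vec (Sg (mon F [:: b]) n) = map ir [seq altv b n s | s <- Slist].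
Proof.
rewrite /vec -map_comp; apply: eq_map => s; rewrite /comp.
rewrite /Sg (big_morph (fun p => coef p s) (fun x y => coefD x y s) (coef0 F s)).
under eq_bigr => i _ do rewrite coef_sign powX coef_mon.
transitivity (foldr (fun i acc => (-1) ^+ i * (nseq i b == s)%:R + acc) (0 : F) (iota 0 n)).
  rewrite -(big_foldr _ _ (fun i => (-1) ^+ i * (nseq i b == s)%:R : F)).
  by apply: eq_bigr => i _; rewrite addn0.
rewrite /altv; elim: (iota 0 n) => [|i l IH]; first by rewrite /= rmorph0.
rewrite [in RHS]/= rmorphD rmorphM rmorph_sign rmorph_nat weqE.
by rewrite [in LHS]/= IH.
Qed.

Lemma step (c1 c2 v v' : A1 F) (C1 C2 V V' : seq int) :
  vec c1 = map ir C1 -> vec c2 = map ir C2 -> vec v = map ir V -> vec v' = map ir V' ->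
  vec (c2 * v' * c1 * v) = map ir (vmul (vmul (vmul C2 V') C1) V).
Proof. by move=> h1 h2 h3 h4; rewrite !vec_mul h1 h2 h3 h4 !vmul_map. Qed.

Lemma vec_iter (u u' v v' : A1 F) (U U' V V' : seq int) :
  vec u = map ir U -> vec u' = map ir U' -> vec v = map ir V -> vec v' = map ir V' ->
  forall n, vec (gcomm_iter (u, u') (v, v') n).1 = map ir (iter n (fun c => gci c (V, V')) (U, U')).1 /\
            vec (gcomm_iter (u, u') (v, v') n).2 = map ir (iter n (fun c => gci c (V, V')) (U, U')).2.
Proof.
move=> hu hu' hv hv'; elim => [|n [IH1 IH2]]; first by split.
split.
  exact: (step IH1 IH2 hv hv').
exact: (step hv hv' IH1 IH2).
Qed.

Lemma lamB p q : lam (p - q) = lam p - lam q.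
Proof. rewrite /lam !coefB; ring. Qed.

Lemma lam1 : lam (1 : A1 F) = 0.
Proof. by rewrite /lam !coef1 /= !mulr0 addr0. Qed.

Lemma nat_ne0 (k : nat) : k \notin [pchar F] -> prime k -> (k%:R : F) != 0.
Proof. by move=> h hp; apply: contra h => e; rewrite inE /= hp e. Qed.

Lemma not_units : (2%:R : F) != 0 -> (3%:R : F) != 0 -> ~ B1_units_engel F 5.
Proof.
move=> h2 h3 H.
have iu : inv_in_B1 (1 + mon F [:: false]) (Sg (mon F [:: false]) 3).
  apply: inv_ok => //; apply: inIgen; right; left; exists (nseq 3 false); split => //.
have iv : inv_in_B1 (1 + mon F [:: true]) (Sg (mon F [:: true]) 8).
  apply: inv_ok => //; apply: inIgen; left; exists (nseq 8 true); split => //.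
have := H _ _ _ _ iu iv; rewrite /eqB => /inI_lam; rewrite lamB lam1 subr0.
have [E1 _] := vec_iter (vec_u false) (vec_S false 3) (vec_u true) (vec_S true 8) 5.
move: E1; set c := (gcomm_iter _ _ 5).1; set C := (iter 5 _ _).1 => E1.
have eN : finalN = 5%:R * lk C w1 + 2%:R * lk C w2 := erefl.
clearbody C.
have hw1 : w1 \in Slist by [].
have hw2 : w2 \in Slist by [].
rewrite /lam -(lk_vec c hw1) -(lk_vec c hw2) E1 !lk_map.
have -> : 5%:R * (lk C w1)%:~R + 2%:R * (lk C w2)%:~R = (finalN%:~R : F).
  by rewrite eN rmorphD !rmorphM !rmorph_nat.
rewrite finalN_val rmorph_nat.
have -> : (12%:R : F) = 2%:R * 2%:R * 3%:R by rewrite -!natrM.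
by apply/eqP; rewrite !mulf_neq0.
Qed.
End S.


Theorem corollary1p3 (F : fieldType) :
  (2%N \notin [pchar F]) -> (3%N \notin [pchar F]) ->
  B1_lie_engel F 5 /\ ~ B1_units_engel F 5.
Proof.
move=> h2 h3; have n2 := nat_ne0 h2 isT; have n3 := nat_ne0 h3 isT.
by split; [exact: engel | exact: not_units].
Qed.
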